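(* Let $\mathfrak l$ be any Lagrangian subalgebra of $\mathfrak d$, regarded as a point of $\mathrm{Gr}(n,\mathfrak d)$. Then the Schouten bracket of $\Pi$ with itself vanishes at $\mathfrak l$: $[\Pi,\Pi](\mathfrak l)=0$.
   Context: Let $(\mathfrak u,\mathfrak u^* )$ be a finite-dimensional real Lie bialgebra, $n=\dim\mathfrak u$, and let $\mathfrak d=\mathfrak u\bowtie\mathfrak u^*$ be its double: the vector space $\mathfrak u\oplus\mathfrak u^*$ with the symmetric nondegenerate form $\langle x+\xi,y+\eta\rangle=(x,\eta)+(y,\xi)$ ($x,y\in\mathfrak u$, $\xi,\eta\in\mathfrak u^*$, $(\cdot,\cdot)$ the natural pairing), equipped with the unique Lie bracket for which $\langle\,,\rangle$ is ad-invariant and $\mathfrak u$, $\mathfrak u^*$ are subalgebras. A Lagrangian subalgebra of $\mathfrak d$ is a Lie subalgebra $\mathfrak l$ with $\dim\mathfrak l=n$ and $\langle a,b\rangle=0$ for all $a,b\in\mathfrak l$. $\mathrm{Gr}(n,\mathfrak d)$ is the Grassmannian of $n$-dimensional subspaces of $\mathfrak d$. Let $D$ be the adjoint group of $\mathfrak d$, acting on $\mathrm{Gr}(n,\mathfrak d)$, and let $\kappa:\mathfrak d\to\chi^1(\mathrm{Gr}(n,\mathfrak d))$ be the induced Lie algebra anti-homomorphism into vector fields, extended multilinearly to $\kappa:\wedge^k\mathfrak d\to\chi^k(\mathrm{Gr}(n,\mathfrak d))$. Identify $\mathfrak d^*\cong\mathfrak u^*\oplus\mathfrak u$ and define $R\in\wedge^2\mathfrak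 d$ by $R(\xi_1+x_1,\xi_2+x_2)=(\xi_2,x_1)-(\xi_1,x_2)$; equivalently $R=\sum_i\eta_i\wedge e_i$ for a basis $\{e_i\}$ of $\mathfrak u$ and dual basis $\{\eta_i\}$ of $\mathfrak u^*$. Define the bivector field $\Pi=\tfrac12\kappa(R)$ on $\mathrm{Gr}(n,\mathfrak d)$. *)

(* Defs.v *)
From HB Require Import structures.
From mathcomp Require Import all_boot all_order all_algebra.
From mathcomp Require Import all_classical all_reals all_analysis.
Set Implicit Arguments. Unset Strict Implicit. Unset Printing Implicit Defensive.
Import Order.TTheory GRing.Theory Num.Theory.
Import numFieldNormedType.Exports.
Local Open Scope ring_scope.

(* The double d = u ⊕ u^*, with u = R^n.  Elements of d are row vectors    *)
(* of size n+n: coordinates lshift n i are along the basis e_i of u,       *)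
(* coordinates rshift n i along the dual basis eta_i of u^*.               *)
(* A Lie bracket on d is given by structure constants C a b c :            *)
(*     [E_a, E_b] = \sum_c C a b c E_c.                                    *)

Section Double.
Variables (R : realType) (n : nat).
Local Notation m := (n + n)%N.
Local Notation vec := 'rV[R]_m.
Implicit Types (C : 'I_m -> 'I_m -> 'I_m -> R).

Definition e_u (i : 'I_n) : vec := delta_mx 0 (lshift n i).
Definition e_ustar (i : 'I_n) : vec := delta_mx 0 (rshift n i).

Definition dbr C (x y : vec) : vec :=
  \row_c \sum_a \sum_b x 0 a * y 0 b * C a b c.

Definition dform (x y : vec) : R :=
  \sum_i (x 0 (lshift n i) * y 0 (rshift n i)
          + x 0 (rshift n i) * y 0 (lshift n i)).

Definition is_lie_bracket C : Prop :=
  (forall a b c, C a b c = - C b a c) /\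
  (forall x y z : vec,
      dbr C x (dbr C y z) + dbr C y (dbr C z x) + dbr C z (dbr C x y) = 0).

Definition form_invariant C : Prop :=
  forall x y z : vec, dform (dbr C x y) z = dform x (dbr C y z).

Definition u_subalgebra C : Prop :=
  forall i j k : 'I_n, C (lshift n i) (lshift n j) (rshift n k) = 0.
Definition ustar_subalgebra C : Prop :=
  forall i j k : 'I_n, C (rshift n i) (rshift n j) (lshift n k) = 0.

(* d is the double of the Lie bialgebra (u, u^* ) (Manin triple). *)
Definition is_double_bracket C : Prop :=
  [/\ is_lie_bracket C, form_invariant C, u_subalgebra C & ustar_subalgebra C].

(* Lagrangian subalgebra, given by a basis: the n rows of L *)
Definition lagrangian_subalgebra C (L : 'M[R]_(n, m)) : Prop :=
  [/\ row_free L,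
      forall i j, dform (row i L) (row j L) = 0 &
      forall i j, (dbr C (row i L) (row j L) <= L)%MS].

(* matrix of ad_x acting on row vectors: y *m adm C x = [x, y] *)
Definition adm C (x : vec) : 'M[R]_m :=
  \matrix_(b, c) \sum_a x 0 a * C a b c.

(* Graph chart of Gr(n, d) around the point rowspace L, with complement
   rowspace K (col_mx L K invertible): the matrix A : 'M_n corresponds to
   the subspace spanned by the rows of L + A *m K, i.e. the graph of the
   linear map l -> c given by A.  Tangent vectors at A are matrices 'M_n. *)

(* kappa(x) in the chart: d/dt|_{t=0} exp(t ad_x) . W_A, where the rows of
   L + A K are moved to (L + A K) exp(t adm x); writing
   (L + A K) adm x = P L + Q K, the velocity in the chart is Q - P A. *)
Definition kappa C (L K : 'M[R]_(n, m)) (x : vec) (A : 'M[R]_n) : 'M[R]_n :=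
  let PQ := (L + A *m K) *m adm C x *m invmx (col_mx L K) in
  rsubmx PQ - lsubmx PQ *m A.

(* Pi = 1/2 kappa(R), R = \sum_i eta_i /\ e_i, with
   (V /\ W)^{pq} = V^p W^q - V^q W^p ; components are indexed by
   pairs p = (p.1, p.2) : 'I_n * 'I_n (the coordinate A p.1 p.2). *)
Definition Pi C (L K : 'M[R]_(n, m)) (A : 'M[R]_n) (p q : 'I_n * 'I_n) : R :=
  2^-1 * \sum_i (kappa C L K (e_ustar i) A p.1 p.2 * kappa C L K (e_u i) A q.1 q.2
               - kappa C L K (e_ustar i) A q.1 q.2 * kappa C L K (e_u i) A p.1 p.2).

End Double.

Definition schouten_self (R : realType) (k l : nat)
    (P : 'M[R]_(k, l) -> 'I_k * 'I_l -> 'I_k * 'I_l -> R)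
    (y : 'M[R]_(k, l)) (p q r : 'I_k * 'I_l) : R :=
  2 * \sum_(s : 'I_k * 'I_l)
    (P y s p * 'D_(delta_mx s.1 s.2) (fun z => P z q r) y
     + P y s q * 'D_(delta_mx s.1 s.2) (fun z => P z r p) y
     + P y s r * 'D_(delta_mx s.1 s.2) (fun z => P z p q) y).

(* Main.v *)
Require Import Defs.
From HB Require Import structures.
From mathcomp Require Import all_boot all_order all_algebra.
From mathcomp Require Import all_classical all_reals all_analysis.
From mathcomp Require Import ring lra.
Set Implicit Arguments. Unset Strict Implicit. Unset Printing Implicit Defensive.
Import Order.TTheory GRing.Theory Num.Theory.
Local Open Scope ring_scope.

Section Alg.
Variables (R : realType) (n : nat) (C : 'I_(n + n) -> 'I_(n + n) -> 'I_(n + n) -> R).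
Local Notation m := (n + n)%N.
Local Notation vec := 'rV[R]_m.

Lemma dbrE (x y : vec) : dbr C x y = y *m adm C x.
Proof.
apply/rowP => c; rewrite !mxE exchange_big /=; apply: eq_bigr => b _.
rewrite mxE big_distrr /=; apply: eq_bigr => a _; ring.
Qed.

Lemma admDZ a (x y : vec) : adm C (a *: x + y) = a *: adm C x + adm C y.
Proof.
apply/matrixP => b c; rewrite !mxE big_distrr -big_split /=.
by apply: eq_bigr => i _; rewrite !mxE; ring.
Qed.

Definition Jm : 'M[R]_m := block_mx 0 1%:M 1%:M 0.

Lemma dformE (x y : vec) : dform x y = (x *m Jm *m y^T) 0 0.
Proof.
rewrite /dform /Jm -[x]hsubmxK -[y]hsubmxK mul_row_block !mulmx0 !mulmx1 add0r addr0.
rewrite tr_row_mx mul_row_col mxE big_split /= addrC !mxE.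
congr (_ + _); apply: eq_bigr => i _; rewrite ?row_mxEl ?row_mxEr !mxE ?row_mxEl ?row_mxEr //; ring.
Qed.


Hypothesis hC : is_double_bracket C.

Lemma dform_sym (x y : vec) : dform x y = dform y x.
Proof. by rewrite /dform; apply: eq_bigr => i _; ring. Qed.

Lemma dformLl a (x y z : vec) : dform (a *: x + y) z = a * dform x z + dform y z.
Proof. by rewrite !dformE !mulmxDl -!scalemxAl !mxE. Qed.

Lemma dformLr a (x y z : vec) : dform z (a *: x + y) = a * dform z x + dform z y.
Proof. by rewrite ![dform z _]dform_sym dformLl. Qed.

Lemma dformDl (x y z : vec) : dform (x + y) z = dform x z + dform y z.
Proof. by rewrite !dformE !mulmxDl mxE. Qed.
Lemma dformDr (x y z : vec) : dform z (x + y) = dform z x + dform z y.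
Proof. by rewrite ![dform z _]dform_sym dformDl. Qed.
Lemma dformNl (x z : vec) : dform (- x) z = - dform x z.
Proof. by rewrite !dformE !mulNmx mxE. Qed.
Lemma dformNr (x z : vec) : dform z (- x) = - dform z x.
Proof. by rewrite ![dform z _]dform_sym dformNl. Qed.
Lemma dformBl (x y z : vec) : dform (x - y) z = dform x z - dform y z.
Proof. by rewrite dformDl dformNl. Qed.
Lemma dformBr (x y z : vec) : dform z (x - y) = dform z x - dform z y.
Proof. by rewrite dformDr dformNr. Qed.

Lemma dbr_anti (x y : vec) : dbr C x y = - dbr C y x.
Proof.
case: hC => [[ha _] _ _ _].
apply/rowP => c; rewrite !mxE exchange_big -sumrN; apply: eq_bigr => b _.
rewrite -sumrN; apply: eq_bigr => a _; rewrite ha; ring.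
Qed.

Lemma dbrLl a (x y z : vec) : dbr C (a *: x + y) z = a *: dbr C x z + dbr C y z.
Proof. by rewrite !dbrE admDZ mulmxDr scalemxAr. Qed.
Lemma dbrLr a (x y z : vec) : dbr C z (a *: x + y) = a *: dbr C z x + dbr C z y.
Proof. by rewrite !dbrE mulmxDl scalemxAl. Qed.
Lemma dbrDl (x y z : vec) : dbr C (x + y) z = dbr C x z + dbr C y z.
Proof. by rewrite !dbrE -mulmxDr -[X in adm C (X + _)]scale1r admDZ scale1r. Qed.
Lemma dbrDr (x y z : vec) : dbr C z (x + y) = dbr C z x + dbr C z y.
Proof. by rewrite !dbrE mulmxDl. Qed.
Lemma dbrNr (x z : vec) : dbr C z (- x) = - dbr C z x.
Proof. by rewrite !dbrE mulNmx. Qed.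
Lemma dbrNl (x z : vec) : dbr C (- x) z = - dbr C x z.
Proof. by rewrite dbr_anti dbrNr opprK dbr_anti. Qed.
Lemma dbrBl (x y z : vec) : dbr C (x - y) z = dbr C x z - dbr C y z.
Proof. by rewrite dbrDl dbrNl. Qed.
Lemma dbrBr (x y z : vec) : dbr C z (x - y) = dbr C z x - dbr C z y.
Proof. by rewrite dbrDr dbrNr. Qed.

Lemma rowvP (A B : 'M[R]_m) : (forall z : vec, z *m A = z *m B) -> A = B.
Proof.
move=> h; apply/row_matrixP => i.
by rewrite -[A]mul1mx -[B]mul1mx !row_mul h.
Qed.

Lemma adm_jacobi (x y : vec) :
  adm C y *m adm C x - adm C x *m adm C y = adm C (dbr C x y).
Proof.
case: hC => [[_ hj] _ _ _].
apply: rowvP => z; rewrite mulmxBr !mulmxA -!dbrE.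
have h := hj x y z.
rewrite [dbr C z x]dbr_anti dbrNr [dbr C z (dbr C x y)]dbr_anti in h.
by apply/eqP; rewrite -subr_eq0 -h.
Qed.
End Alg.

Section Trilin.
Variables (R : realType) (n : nat) (C : 'I_(n + n) -> 'I_(n + n) -> 'I_(n + n) -> R).
Local Notation m := (n + n)%N.
Local Notation vec := 'rV[R]_m.
Hypothesis hC : is_double_bracket C.

Definition pu (x : vec) : vec := row_mx (lsubmx x) 0.
Definition ps (x : vec) : vec := row_mx 0 (rsubmx x).
Definition rho (x : vec) : vec := ps x - pu x.

Lemma puEl x i : pu x 0 (lshift n i) = x 0 (lshift n i).
Proof. by rewrite /pu row_mxEl mxE. Qed.
Lemma puEr x i : pu x 0 (rshift n i) = 0.
Proof. by rewrite /pu row_mxEr mxE. Qed.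
Lemma psEl x i : ps x 0 (lshift n i) = 0.
Proof. by rewrite /ps row_mxEl mxE. Qed.
Lemma psEr x i : ps x 0 (rshift n i) = x 0 (rshift n i).
Proof. by rewrite /ps row_mxEr mxE. Qed.

Lemma pu_ps x : x = pu x + ps x.
Proof. by rewrite /pu /ps add_row_mx addr0 add0r hsubmxK. Qed.

Lemma dbr_uu a b : rsubmx (dbr C (pu a) (pu b)) = 0.
Proof.
case: hC => _ _ hu _.
apply/rowP => k; rewrite !mxE; apply: big1 => i _; apply: big1 => j _.
case: (split_ordP i) => i' ->; last by rewrite puEr !mul0r.
case: (split_ordP j) => j' ->; last by rewrite puEr mulr0 mul0r.
by rewrite hu mulr0.
Qed.

Lemma dbr_ss a b : lsubmx (dbr C (ps a) (ps b)) = 0.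
Proof.
case: hC => _ _ _ hs.
apply/rowP => k; rewrite !mxE; apply: big1 => i _; apply: big1 => j _.
case: (split_ordP i) => i' ->; first by rewrite psEl !mul0r.
case: (split_ordP j) => j' ->; first by rewrite psEl mulr0 mul0r.
by rewrite hs mulr0.
Qed.

Lemma dform_uu a b : dform (pu a) (pu b) = 0.
Proof. by rewrite /dform big1 // => i _; rewrite !puEl !puEr mulr0 mul0r addr0. Qed.
Lemma dform_ss a b : dform (ps a) (ps b) = 0.
Proof. by rewrite /dform big1 // => i _; rewrite !psEl !psEr mulr0 mul0r addr0. Qed.

Lemma f_uuu a b c : dform (dbr C (pu a) (pu b)) (pu c) = 0.
Proof.
have -> : dbr C (pu a) (pu b) = pu (dbr C (pu a) (pu b)).
  have h := dbr_uu a b; set z := dbr C (pu a) (pu b) in h *.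
  by rewrite /pu -h hsubmxK.
exact: dform_uu.
Qed.
Lemma f_sss a b c : dform (dbr C (ps a) (ps b)) (ps c) = 0.
Proof.
have -> : dbr C (ps a) (ps b) = ps (dbr C (ps a) (ps b)).
  have h := dbr_ss a b; set z := dbr C (ps a) (ps b) in h *.
  by rewrite /ps -h hsubmxK.
exact: dform_ss.
Qed.

Lemma cyc (x y z : vec) : dform (dbr C x y) z = dform (dbr C y z) x.
Proof. by case: hC => _ hinv _ _; rewrite hinv dform_sym. Qed.

Lemma expand (a1 a2 b1 b2 c1 c2 : vec) :
  dform (dbr C (a2 - a1) (b2 - b1)) (c1 + c2)
  + dform (dbr C (a1 + a2) (b2 - b1)) (c2 - c1)
  + dform (dbr C (a2 - a1) (b1 + b2)) (c2 - c1)
  = - dform (dbr C (a1 + a2) (b1 + b2)) (c1 + c2)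
    + 4 * dform (dbr C a1 b1) c1 + 4 * dform (dbr C a2 b2) c2.
Proof.
rewrite !(dbrDl C, dbrDr C, dbrNl hC, dbrNr C, dformDl, dformDr, dformNl, dformNr).
ring.
Qed.



Lemma dform_eu i (b : vec) : dform (e_u R i) b = b 0 (rshift n i).
Proof.
rewrite /dform (bigD1 i) //= big1 ?addr0 => [|j ji].
  by rewrite /e_u !mxE /= eq_lshift eqxx eq_rlshift /= mul1r mul0r addr0.
by rewrite /e_u !mxE /= eq_lshift (negbTE ji) eq_rlshift /= !mul0r addr0.
Qed.

Lemma dform_eus i (b : vec) : dform (e_ustar R i) b = b 0 (lshift n i).
Proof.
rewrite /dform (bigD1 i) //= big1 ?addr0 => [|j ji].
  by rewrite /e_ustar !mxE /= eq_rshift eqxx eq_lrshift /= mul1r mul0r add0r.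
by rewrite /e_ustar !mxE /= eq_rshift (negbTE ji) eq_lrshift /= !mul0r addr0.
Qed.

Lemma rhoEl (b : vec) i : rho b 0 (lshift n i) = - b 0 (lshift n i).
Proof. by rewrite /rho [LHS]mxE [(- pu b) _ _]mxE psEl puEl sub0r. Qed.
Lemma rhoEr (b : vec) i : rho b 0 (rshift n i) = b 0 (rshift n i).
Proof. by rewrite /rho [LHS]mxE [(- pu b) _ _]mxE psEr puEr subr0. Qed.

Lemma rho_exp (b : vec) : rho b = \sum_(i < n) (- b 0 (lshift n i)) *: e_u R i
  + \sum_(i < n) b 0 (rshift n i) *: e_ustar R i.
Proof.
rewrite {1}[rho b]row_sum_delta big_split_ord /=; congr (_ + _); apply: eq_bigr => i _.
  by rewrite rhoEl.
by rewrite rhoEr.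
Qed.

Lemma rho_lemma (phi : vec -> R)
  (hphi : forall a x y, phi (a *: x + y) = a * phi x + phi y) (b : vec) :
  \sum_(i < n) (phi (e_ustar R i) * dform (e_u R i) b - phi (e_u R i) * dform (e_ustar R i) b)
  = phi (rho b).
Proof.
have phi0 : phi 0 = 0.
  have h := hphi 1 0 0; rewrite scale1r addr0 mul1r in h; lra.
have phiD x y : phi (x + y) = phi x + phi y by rewrite -[x]scale1r hphi scale1r mul1r.
have phiZ a x : phi (a *: x) = a * phi x by rewrite -[a *: x]addr0 hphi phi0 addr0.
have phi_sum (F : 'I_n -> vec) : phi (\sum_(i < n) F i) = \sum_(i < n) phi (F i).
  exact: (big_morph phi phiD phi0).
rewrite rho_exp phiD !phi_sum -big_split /=; apply: eq_bigr => i _.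
rewrite !phiZ dform_eu dform_eus; ring.
Qed.

End Trilin.

Section Chart.
Variables (R : realType) (n : nat) (C : 'I_(n + n) -> 'I_(n + n) -> 'I_(n + n) -> R).
Local Notation m := (n + n)%N.
Local Notation vec := 'rV[R]_m.
Hypothesis hC : is_double_bracket C.
Variables (L K : 'M[R]_(n, m)).
Hypothesis hL : lagrangian_subalgebra C L.
Hypothesis hK : col_mx L K \in unitmx.

Let T := col_mx L K.
Let Mi := invmx T.
Definition kk (x : vec) : 'M[R]_n := rsubmx (L *m adm C x *m Mi).
Definition X11 (x : vec) : 'M[R]_n := lsubmx (L *m adm C x *m Mi).
Definition X22 (x : vec) : 'M[R]_n := rsubmx (K *m adm C x *m Mi).
Definition X21 (x : vec) : 'M[R]_n := lsubmx (K *m adm C x *m Mi).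
Definition Dk (x : vec) (E : 'M[R]_n) : 'M[R]_n := E *m X22 x - X11 x *m E.

Lemma kappa_expand x A :
  kappa C L K x A = kk x + A *m X22 x - X11 x *m A - A *m X21 x *m A.
Proof.
rewrite /kappa /kk /X22 /X11 /X21 -/T -/Mi.
have e : (L + A *m K) *m adm C x *m Mi = L *m adm C x *m Mi + A *m (K *m adm C x *m Mi).
  by rewrite !mulmxDl !mulmxA.
rewrite e !linearD /= mulmxDl opprD addrA !mulmx_rsub !mulmx_lsub !mulmxA.
by [].
Qed.

Lemma kkK y : kk y *m K = L *m adm C y - X11 y *m L.
Proof.
apply/eqP; rewrite eq_sym subr_eq addrC; apply/eqP.
have -> : L *m adm C y = L *m adm C y *m Mi *m T by rewrite -mulmxA mulVmx // mulmx1.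
by rewrite -[L *m adm C y *m Mi]hsubmxK /T mul_row_col.
Qed.

Lemma kkX22 x y : kk y *m X22 x = rsubmx (L *m adm C y *m adm C x *m Mi) - X11 y *m kk x.
Proof.
rewrite /X22 mulmx_rsub !mulmxA kkK mulmxBl mulmxBl linearB /=.
by rewrite /kk mulmx_rsub !mulmxA.
Qed.

Lemma Dk_comm x y : Dk x (kk y) - Dk y (kk x) = kk (dbr C x y).
Proof.
rewrite /Dk !kkX22 /kk -(adm_jacobi hC) mulmxBr mulmxBl linearB /= -!mulmxA.
set a := rsubmx _; set b := rsubmx _.
set c := X11 y *m _; set d := X11 x *m _.
rewrite -/(kk x) -/(kk y).
rewrite linearB /=; apply/matrixP => i j; rewrite !mxE; ring.
Qed.

Lemma entry_tr p q r (Z : 'M[R]_(p, q)) (W : 'M[R]_(r, q)) i j :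
  (Z *m W^T) i j = (row i Z *m (row j W)^T) 0 0.
Proof. by rewrite !mxE; apply: eq_bigr => k _; rewrite !mxE. Qed.

Lemma entry_tr0 q r (Z : 'rV[R]_q) (W : 'M[R]_(r, q)) j :
  (Z *m W^T) 0 j = (Z *m (row j W)^T) 0 0.
Proof. by rewrite !mxE; apply: eq_bigr => k _; rewrite !mxE. Qed.

Lemma LJL : L *m (@Jm R n) *m L^T = 0.
Proof.
case: hL => _ hi _; apply/matrixP => i j.
by rewrite entry_tr row_mul -dformE hi mxE.
Qed.

Lemma JJ : (@Jm R n) *m (@Jm R n) = 1%:M.
Proof.
rewrite /Jm mulmx_block !mulmx0 !mul0mx !mulmx1 !addr0 !add0r.
by rewrite (scalar_mx_block n n 1).
Qed.

Lemma rank_unitl p q (U : 'M[R]_p) (X : 'M[R]_(p, q)) :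
  U \in unitmx -> \rank (U *m X) = \rank X.
Proof.
move=> hU; apply/eqP; rewrite eqn_leq mxrankM_maxr /=.
by rewrite -{1}[X](mulKmx hU) mxrankM_maxr.
Qed.

Definition G := K *m (@Jm R n) *m L^T.

Lemma TJL : T *m (@Jm R n) *m L^T = col_mx 0 G.
Proof. by rewrite /T !mul_col_mx LJL. Qed.

Lemma G_unit : G \in unitmx.
Proof.
case: hL => hf _ _.
have hJ : (@Jm R n) \in unitmx by case: (mulmx1_unit JJ).
have r1 : \rank (col_mx (0 : 'M[R]_n) G) = n.
  rewrite -TJL -mulmxA rank_unitl // rank_unitl // mxrank_tr.
  exact/eqP.
rewrite -row_free_unit /row_free; apply/eqP; rewrite -[RHS]r1.
by rewrite -addsmxE adds0mx.
Qed.

Definition W := (invmx G)^T *m L.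

Lemma JW : (@Jm R n) *m W^T = rsubmx Mi.
Proof.
apply: (can_inj (mulKmx hK)); rewrite -/T.
rewrite mulmx_rsub mulmxV // (scalar_mx_block n n 1) block_mxEh row_mxKr.
rewrite /W trmx_mul trmxK !mulmxA TJL mul_col_mx mul0mx mulmxV //.
exact: G_unit.
Qed.

Lemma Mi_form (y : vec) j : (y *m Mi) 0 (rshift n j) = dform y (row j W).
Proof.
by rewrite dformE -entry_tr0 -mulmxA JW mulmx_rsub !mxE.
Qed.

Definition mm (p : 'I_n * 'I_n) : vec := dbr C (row p.1 L) (row p.2 W).

Lemma kk_form (x : vec) i j : kk x i j = dform x (mm (i, j)).
Proof.
case: hC => _ hinv _ _.
rewrite /kk mxE.
have -> : (L *m adm C x *m Mi) i (rshift n j) = (row i (L *m adm C x *m Mi)) 0 (rshift n j) by rewrite [RHS]mxE.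
rewrite row_mul row_mul -dbrE Mi_form /mm /=.
by rewrite hinv.
Qed.

Lemma adm_row_sub k : (L *m adm C (row k L) <= L)%MS.
Proof. case: hL => _ _ hs; apply/row_subP => j; rewrite row_mul -dbrE; exact: hs. Qed.

Lemma dbr_rowL_sub k (b : vec) : (b <= L)%MS -> (dbr C (row k L) b <= L)%MS.
Proof.
case/submxP => v ->; rewrite dbrE -mulmxA.
exact: submx_trans (submxMl _ _) (adm_row_sub k).
Qed.

Lemma adm_sub (a : vec) : (a <= L)%MS -> (L *m adm C a <= L)%MS.
Proof.
move=> ha; apply/row_subP => k; rewrite row_mul -dbrE (dbr_anti hC) eqmx_opp.
exact: dbr_rowL_sub.
Qed.

Lemma dbr_sub (a b : vec) : (a <= L)%MS -> (b <= L)%MS -> (dbr C a b <= L)%MS.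
Proof.
move=> ha /submxP [v ->]; rewrite dbrE -mulmxA.
exact: submx_trans (submxMl _ _) (adm_sub ha).
Qed.

Lemma dform_iso (a b : vec) : (a <= L)%MS -> (b <= L)%MS -> dform a b = 0.
Proof.
move=> /submxP[u ->] /submxP[v ->]; rewrite dformE trmx_mul.
have -> : u *m L *m (@Jm R n) *m (L^T *m v^T) = u *m (L *m (@Jm R n) *m L^T) *m v^T.
  by rewrite !mulmxA.
by rewrite LJL mulmx0 mul0mx mxE.
Qed.

Lemma mm_sub p : (mm p <= L)%MS.
Proof. apply: dbr_rowL_sub; rewrite /W row_mul; exact: submxMl. Qed.

Lemma kk_form' (x : vec) p : kk x p.1 p.2 = dform x (mm p).
Proof. by case: p => i j; rewrite kk_form. Qed.

Lemma kkL a x y : kk (a *: x + y) = a *: kk x + kk y.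
Proof. by rewrite /kk admDZ mulmxDr -scalemxAr mulmxDl -scalemxAl linearD linearZ. Qed.
Lemma X11L a x y : X11 (a *: x + y) = a *: X11 x + X11 y.
Proof. by rewrite /X11 admDZ mulmxDr -scalemxAr mulmxDl -scalemxAl linearD linearZ. Qed.
Lemma X22L a x y : X22 (a *: x + y) = a *: X22 x + X22 y.
Proof. by rewrite /X22 admDZ mulmxDr -scalemxAr mulmxDl -scalemxAl linearD linearZ. Qed.
Lemma DkL a x y E : Dk (a *: x + y) E = a *: Dk x E + Dk y E.
Proof.
rewrite /Dk X22L X11L mulmxDr mulmxDl -scalemxAr -scalemxAl.
by apply/matrixP => i j; rewrite !mxE; ring.
Qed.

Lemma kappa0 x : kappa C L K x 0 = kk x.
Proof. by rewrite kappa_expand !mul0mx !mulmx0 addr0 !subr0. Qed.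

Lemma kappa_t x t E :
  kappa C L K x (t *: E) = kk x + t *: Dk x E - t ^+ 2 *: (E *m X21 x *m E).
Proof.
rewrite kappa_expand /Dk -!scalemxAl -!scalemxAr scalerBr scalerA -expr2 addrA.
by [].
Qed.

Definition pol x E i j : {poly R} :=
  (kk x i j)%:P + (Dk x E i j) *: 'X - ((E *m X21 x *m E) i j) *: 'X^2.

Lemma pol_eval x E i j t : (pol x E i j).[t] = kappa C L K x (t *: E) i j.
Proof. by rewrite kappa_t /pol !hornerD hornerN !hornerZ hornerC hornerX hornerXn !mxE; ring. Qed.

Lemma pol0 x E i j : (pol x E i j)`_0 = kk x i j.
Proof. by rewrite /pol !coefE /=; ring. Qed.
Lemma pol1 x E i j : (pol x E i j)`_1 = Dk x E i j.
Proof. by rewrite /pol !coefE /=; ring. Qed.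

Definition PP E (q r : 'I_n * 'I_n) : {poly R} :=
  2^-1 *: \sum_i (pol (e_ustar R i) E q.1 q.2 * pol (e_u R i) E r.1 r.2
                 - pol (e_ustar R i) E r.1 r.2 * pol (e_u R i) E q.1 q.2).

Lemma PP_eval E q r t : (PP E q r).[t] = Pi C L K (t *: E) q r.
Proof.
rewrite /PP /Pi hornerZ horner_sum; congr (_ * _); apply: eq_bigr => i _.
by rewrite hornerD hornerN !hornerM !pol_eval.
Qed.

Lemma cyc_zero (a b c : vec) :
  (a <= L)%MS -> (b <= L)%MS -> (c <= L)%MS ->
  dform (dbr C (rho a) (rho b)) c + dform (dbr C (rho b) (rho c)) a
  + dform (dbr C (rho c) (rho a)) b = 0.
Proof.
move=> ha hb hc.
rewrite -(cyc hC a) (cyc hC (rho c)).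
have -> : dform (dbr C (rho a) (rho b)) c + dform (dbr C a (rho b)) (rho c)
  + dform (dbr C (rho a) b) (rho c)
  = dform (dbr C (ps a - pu a) (ps b - pu b)) (pu c + ps c)
  + dform (dbr C (pu a + ps a) (ps b - pu b)) (ps c - pu c)
  + dform (dbr C (ps a - pu a) (pu b + ps b)) (ps c - pu c).
  by rewrite -!pu_ps.
rewrite (expand hC) -!pu_ps (f_uuu hC) (f_sss hC) dform_iso ?dbr_sub //.
by rewrite oppr0 !mulr0 !addr0.
Qed.

Lemma derive_dir (f : 'M[R]_n -> R) (v : 'M[R]_n) :
  'D_v f 0 = derive1 (fun t : R => f (t *: v)) 0.
Proof.
rewrite /derive /derive1.
have -> : (fun h : R => h^-1 *: ((f \o shift 0) (h *: v) - f 0)) =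
  (fun h : R => h^-1 *: ((fun t : R => f (t *: v)) (h + 0) - (fun t : R => f (t *: v)) 0)).
  by apply: funext => h /=; rewrite !addr0 scale0r.
by [].
Qed.


Lemma dPi_raw E q r : 'D_E (fun z => Pi C L K z q r) 0 = (PP E q r)`_1.
Proof.
rewrite derive_dir.
have -> : (fun t : R => Pi C L K (t *: E) q r) = horner (PP E q r).
  by apply: funext => t; rewrite PP_eval.
by rewrite -derive.derivE horner_coef0 coef_deriv mulr1n.
Qed.
Lemma PP1 E q r : (PP E q r)`_1 = 2^-1 * \sum_i
  (Dk (e_ustar R i) E q.1 q.2 * kk (e_u R i) r.1 r.2
   + kk (e_ustar R i) q.1 q.2 * Dk (e_u R i) E r.1 r.2
   - (Dk (e_ustar R i) E r.1 r.2 * kk (e_u R i) q.1 q.2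
      + kk (e_ustar R i) r.1 r.2 * Dk (e_u R i) E q.1 q.2)).
Proof.
rewrite /PP coefZ coef_sum; congr (_ * _); apply: eq_bigr => i _.
rewrite coefB !coefM !big_ord_recl !big_ord0 /= /bump /= !addr0.
rewrite !pol0 !pol1; ring.
Qed.
Lemma hDk E i j a x y : Dk (a *: x + y) E i j = a * Dk x E i j + Dk y E i j.
Proof. by rewrite DkL !mxE. Qed.
Lemma hkk i j a x y : kk (a *: x + y) i j = a * kk x i j + kk y i j.
Proof. by rewrite kkL !mxE. Qed.

Lemma dPi E q r : 'D_E (fun z => Pi C L K z q r) 0
  = 2^-1 * (Dk (rho (mm r)) E q.1 q.2 - Dk (rho (mm q)) E r.1 r.2).
Proof.
rewrite dPi_raw PP1.
rewrite -(rho_lemma (phi := fun x => Dk x E q.1 q.2) (hDk E q.1 q.2)).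
rewrite -(rho_lemma (phi := fun x => Dk x E r.1 r.2) (hDk E r.1 r.2)).
rewrite -sumrB; congr (_ * _); apply: eq_bigr => i _; rewrite !kk_form'; ring.
Qed.

Lemma Pi0 s p : Pi C L K 0 s p = 2^-1 * kk (rho (mm p)) s.1 s.2.
Proof.
rewrite /Pi -(rho_lemma (phi := fun x => kk x s.1 s.2) (hkk s.1 s.2)).
congr (_ * _); apply: eq_bigr => i _; rewrite !kappa0 !kk_form'; ring.
Qed.

Lemma sumDk x (E : 'M[R]_n) i j :
  \sum_(s : 'I_n * 'I_n) E s.1 s.2 * Dk x (delta_mx s.1 s.2) i j = Dk x E i j.
Proof.
rewrite {2}[E]matrix_sum_delta /Dk mulmx_suml mulmx_sumr -sumrB summxE.
rewrite -(pair_big xpredT xpredT (fun a b => E a b * Dk x (delta_mx a b) i j)) /=.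
apply: eq_bigr => a _; rewrite mulmx_suml mulmx_sumr -sumrB summxE.
apply: eq_bigr => b _; rewrite /Dk -scalemxAl -scalemxAr.
by rewrite -scalerBr [RHS]mxE; congr (_ * _); rewrite [RHS]mxE.
Qed.

Lemma sum_term (x y z : vec) (q r : 'I_n * 'I_n) :
  \sum_(s : 'I_n * 'I_n) (2^-1 * kk x s.1 s.2) *
     (2^-1 * (Dk y (delta_mx s.1 s.2) q.1 q.2 - Dk z (delta_mx s.1 s.2) r.1 r.2))
  = 2^-1 * 2^-1 * (Dk y (kk x) q.1 q.2 - Dk z (kk x) r.1 r.2).
Proof.
rewrite -(sumDk y (kk x) q.1 q.2) -(sumDk z (kk x) r.1 r.2) -sumrB mulr_sumr.
by apply: eq_bigr => s _; ring.
Qed.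

End Chart.



Section F.
Variables (R : realType) (n : nat) (C : 'I_(n + n) -> 'I_(n + n) -> 'I_(n + n) -> R).
Hypothesis hC : is_double_bracket C.
Variables (L K : 'M[R]_(n, n + n)).
Hypothesis hL : lagrangian_subalgebra C L.
Hypothesis hK : col_mx L K \in unitmx.
Lemma comb (x1 x2 x3 x4 x5 x6 k1 k2 k3 : R) :
  x1 - x2 = k1 -> x3 - x4 = k2 -> x5 - x6 = k3 -> k1 + k2 + k3 = 0 ->
  2 * (2^-1 / 2 * (x1 - x4) + 2^-1 / 2 * (x3 - x6) + 2^-1 / 2 * (x5 - x2)) = 0.
Proof.
move=> h1 h2 h3 h4.
apply: (@eq_trans _ _ (2^-1 * ((x1 - x2) + (x3 - x4) + (x5 - x6)))).
  by field.
by rewrite h1 h2 h3 h4 mulr0.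
Qed.

Lemma final p q r : schouten_self (Pi C L K) 0 p q r = 0.
Proof.
rewrite /schouten_self.
under eq_bigr => s _ do rewrite !(dPi hC hL hK) !(Pi0 hC hL hK).
rewrite !big_split /= !sum_term.
set ap := rho (mm C L K p); set aq := rho (mm C L K q); set ar := rho (mm C L K r).
have c1 := Dk_comm hC hK ar ap.
have c2 := Dk_comm hC hK ap aq.
have c3 := Dk_comm hC hK aq ar.
move/matrixP/(_ q.1 q.2): c1; rewrite [LHS]mxE [X in _ + X = _]mxE (kk_form' hC hL hK) => c1.
move/matrixP/(_ r.1 r.2): c2; rewrite [LHS]mxE [X in _ + X = _]mxE (kk_form' hC hL hK) => c2.
move/matrixP/(_ p.1 p.2): c3; rewrite [LHS]mxE [X in _ + X = _]mxE (kk_form' hC hL hK) => c3.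
have cz := cyc_zero hC hL (mm_sub K hL r) (mm_sub K hL p) (mm_sub K hL q).
rewrite -/ap -/aq -/ar in cz.
exact: comb c1 c2 c3 cz.
Qed.
End F.


Unset Implicit Arguments.

Theorem theorem2p14 (R : realType) (n : nat)
    (C : 'I_(n + n) -> 'I_(n + n) -> 'I_(n + n) -> R)
    (hC : is_double_bracket C)
    (L : 'M[R]_(n, n + n)) (hL : lagrangian_subalgebra C L)
    (K : 'M[R]_(n, n + n)) (hK : col_mx L K \in unitmx) :
  forall p q r : 'I_n * 'I_n, schouten_self (Pi C L K) 0 p q r = 0.
Proof.
move=> p q r; exact: (final hC hL hK p q r).
Qed.
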